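(* Let $K$ be a stochastic kernel on a compact space $\Sigma$ with Borel $\sigma$-algebra $\mathscr{F}$, let $\Sigma_0\subset\Sigma_1\subset\Sigma_2$ be sets in $\mathscr{F}$ and $r>0$. Assume: (A1) $\mathscr{P}_{n_0}(x,\Sigma_0)\ge b_0>0$ for all $x\in\Sigma_0$; (A2) $\mathscr{P}_{n_1}(x,\Sigma_1)\ge1-r/4$ for all $x\in\Sigma_1\setminus\Sigma_0$; (A3) $\mathscr{P}_{n_2}(x,\Sigma_2)\ge1-r/4$ for all $x\in\Sigma_2\setminus\Sigma_1$; (A4) $\mathscr{P}^*_n(x,\Sigma_1^{\complement})\ge1-r/4$ for all $x\in\Sigma_2^{\complement}$ and all $n\ge0$. If $(1-b_0)^q<r/4$ for some $q\in\mathbb{N}$, then with $N:=qn_0+n_1+n_2$, for all $x\in\Sigma$, $$\mathbb{P}_x[\exists\, j\ge N:\ \xi^x_j\in\Sigma_1]<r.$$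
   Context: For $x\in\Sigma$ let $\mathbb{P}_x$ be the probability on $\Sigma^{\mathbb{N}}$ under which the coordinate process $\{\xi^x_n\}_{n\ge0}$ is a Markov chain with kernel $K$ and $\xi^x_0=x$. For $x\in E\in\mathscr{F}$: $\mathscr{P}_n(x,E)=\mathbb{P}_x[\xi^x_j\notin E\text{ for some }0\le j\le n]$ and $\mathscr{P}^*_n(x,E)=\mathbb{P}_x[\xi^x_j\in E\text{ for all }0\le j\le n]$. Here $n_0,n_1,n_2\in\mathbb{N}$. *)

(* Defs.v *)
From HB Require Import structures.
From mathcomp Require Import all_boot all_order all_algebra.
From mathcomp Require Import all_classical all_reals all_analysis.
Set Implicit Arguments. Unset Strict Implicit. Unset Printing Implicit Defensive.
Import Order.TTheory GRing.Theory Num.Theory.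
Local Open Scope classical_set_scope.
Local Open Scope ring_scope.

Definition borel_space (T : ptopologicalType) := g_sigma_algebraType (@open T).

Section markov.
Context {d : measure_display} {S : measurableType d} {R : realType}.
Local Open Scope ereal_scope.

(* fdd k A n y = P_y[xi_0 in A 0, ..., xi_n in A n] for a Markov chain with
   kernel k started at y, computed by the usual iterated-kernel formula. *)
Fixpoint fdd (k : R.-pker S ~> S) (n : nat) (A : nat -> set S) (y : S) : \bar R :=
  match n with
  | 0 => (\1_(A 0%N) y)%:E
  | n'.+1 => (\1_(A 0%N) y)%:E *
             \int[k y]_z fdd k n' (fun j => A j.+1) z
  end.

Definition is_markov_chain_from {d'} {Omega : measurableType d'}
  (k : R.-pker S ~> S) (x : S) (P : probability Omega R)
  (xi : nat -> Omega -> S) : Prop :=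
  (forall n, measurable_fun [set: Omega] (xi n)) /\
  (forall (n : nat) (A : nat -> set S), (forall j, measurable (A j)) ->
     P [set w | forall j, (j <= n)%N -> A j (xi j w)] = fdd k n A x).

(* curly P_n(x,E) = P_x[xi_j not in E for some 0 <= j <= n] *)
Definition exitP {d'} {Omega : measurableType d'} (P : S -> probability Omega R)
  (xi : nat -> Omega -> S) (n : nat) (x : S) (E : set S) : \bar R :=
  P x [set w | exists j, (j <= n)%N /\ ~ E (xi j w)].

(* curly P^*_n(x,E) = P_x[xi_j in E for all 0 <= j <= n] *)
Definition stayP {d'} {Omega : measurableType d'} (P : S -> probability Omega R)
  (xi : nat -> Omega -> S) (n : nat) (x : S) (E : set S) : \bar R :=
  P x [set w | forall j, (j <= n)%N -> E (xi j w)].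

End markov.

(* Main.v *)
Require Import Defs.
From HB Require Import structures.
From mathcomp Require Import all_boot all_order all_algebra.
From mathcomp Require Import all_classical all_reals all_analysis measurable_realfun.
From mathcomp Require Import lra.
Import Order.TTheory GRing.Theory Num.Theory.
Local Open Scope classical_set_scope.
Local Open Scope ring_scope.

Section aux.
Context {d : measure_display} {S : measurableType d} {R : realType}.
Variable k : R.-pker S ~> S.
Local Open Scope ereal_scope.

Lemma fdd0 A y : fdd k 0 A y = (\1_(A 0%N) y)%:E. Proof. by []. Qed.
Lemma fddS n A y : fdd k n.+1 A y = (\1_(A 0%N) y)%:E *
             \int[k y]_z fdd k n (fun j => A j.+1) z. Proof. by []. Qed.

Lemma indic_ge0 (A : set S) y : (0 <= (\1_A y : R))%R.
Proof. by rewrite indicE. Qed.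

Lemma fdd_ge0 n A y : 0 <= fdd k n A y.
Proof.
elim: n A y => [|n IH] A y; first by rewrite fdd0 lee_fin indic_ge0.
rewrite fddS; apply: mule_ge0; first by rewrite lee_fin indic_ge0.
by apply: integral_ge0 => z _.
Qed.

Lemma fdd_meas n A : (forall j, measurable (A j)) -> measurable_fun [set: S] (fdd k n A).
Proof.
elim: n A => [|n IH] A mA.
  by apply/measurable_EFinP; apply: measurable_indic.
apply: emeasurable_funM.
  by apply/measurable_EFinP; apply: measurable_indic.
apply: (measurable_fun_integral_kernel (measurable_kernel k)).
  by move=> z; exact: fdd_ge0.
exact: IH.
Qed.

Lemma indic1 (A : set S) y : A y -> (\1_A y : R) = 1%R.
Proof. by move=> Ay; rewrite indicE mem_set. Qed.
Lemma indic0 (A : set S) y : ~ A y -> (\1_A y : R) = 0%R.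
Proof. by move=> Ay; rewrite indicE memNset. Qed.

Lemma fdd_out n A y : ~ A 0%N y -> fdd k n A y = 0.
Proof. by case: n => [|n] H; rewrite ?fdd0 ?fddS indic0 ?mul0e. Qed.

Lemma int_le1 (f : S -> \bar R) y : measurable_fun [set: S] f ->
  (forall z, 0 <= f z <= 1) -> \int[k y]_z f z <= 1.
Proof.
move=> mf hf.
apply: (@le_trans _ _ (\int[k y]_z (cst 1) z)).
  apply: ge0_le_integral => //.
  - by move=> z _; case/andP: (hf z).
  - by move=> z _; case/andP: (hf z).
by rewrite integral_cst // mul1e prob_kernel.
Qed.

Lemma fdd_le1 n A y : (forall j, measurable (A j)) -> fdd k n A y <= 1.
Proof.
elim: n A y => [|n IH] A y mA.
  by rewrite fdd0 lee_fin indicE; case: (_ \in _).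
rewrite fddS; have [Ay|Ay] := pselect (A 0%N y).
  rewrite indic1 // mul1e; apply: int_le1; first exact: fdd_meas.
  by move=> z; rewrite fdd_ge0 IH.
by rewrite indic0 // mul0e.
Qed.

Lemma fdd_fin n A y : (forall j, measurable (A j)) -> fdd k n A y \is a fin_num.
Proof.
move=> mA; apply/fin_numPlt; apply/andP; split.
  by apply: (@lt_le_trans _ _ 0); [exact: ltNy0 | exact: fdd_ge0].
by apply: (@le_lt_trans _ _ 1); [exact: fdd_le1 | exact: ltry].
Qed.

Lemma fdd_mono n A B y : (forall j, measurable (A j)) -> (forall j, measurable (B j)) ->
  (forall j, A j `<=` B j) -> fdd k n A y <= fdd k n B y.
Proof.
elim: n A B y => [|n IH] A B y mA mB AB.
  by rewrite !fdd0 lee_fin !indicE; case: (boolP (y \in A 0%N)) => // /set_mem /AB Hb; rewrite mem_set.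
rewrite !fddS; have [Ay|Ay] := pselect (A 0%N y); last first.
  rewrite indic0 // mul0e; apply: mule_ge0; first by rewrite lee_fin indic_ge0.
  by apply: integral_ge0 => z _; exact: fdd_ge0.
rewrite indic1 // indic1; last exact: AB.
rewrite !mul1e; apply: ge0_le_integral => //.
- by move=> z _; exact: fdd_ge0.
- exact: fdd_meas.
- exact: fdd_meas.
- by move=> z _; apply: IH.
Qed.


Definition G (C : set S) (a : nat) : nat -> set S :=
  fun j => if (a <= j)%N then C else setT.

Lemma mG C a j : measurable C -> measurable (G C a j).
Proof. by rewrite /G; case: ifP. Qed.

Lemma fdd_measC (E : set S) n : measurable E -> measurable_fun [set: S] (fdd k n (fun _ => E)).
Proof. by move=> mE; apply: fdd_meas. Qed.

Lemma fdd_measG C a n : measurable C -> measurable_fun [set: S] (fdd k n (G C a)).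
Proof. by move=> mC; apply: fdd_meas => j; exact: mG. Qed.

Lemma stay_mul (E : set S) (mE : measurable E) t L (c : R) : (0 <= c)%R ->
  (forall z, fdd k L (fun _ => E) z <= c%:E) ->
  forall y, fdd k (t + L) (fun _ => E) y <= c%:E * fdd k t (fun _ => E) y.
Proof.
move=> c0 H; elim: t => [|t IH] y.
  rewrite add0n fdd0; have [Ey|Ey] := pselect (E y).
    by rewrite indic1 // mule1.
  by rewrite fdd_out // indic0 // mule0.
rewrite addSn !fddS; have [Ey|Ey] := pselect (E y); last by rewrite indic0 // !mul0e mule0.
rewrite indic1 // !mul1e -ge0_integralZl //; last 2 first.
- exact: fdd_measC.
- by move=> z _; exact: fdd_ge0.
apply: ge0_le_integral => //.
- by move=> z _; exact: fdd_ge0.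
- exact: fdd_measC.
- apply: measurable_funeM; exact: fdd_measC.
Qed.

Lemma step (C E : set S) (mC : measurable C) (mE : measurable E) (c : R) m :
  (0 <= c)%R ->
  (forall z, ~ E z -> forall b, (1 - c)%:E <= fdd k b (G C m) z) ->
  forall n y b, (1 - c)%:E <= fdd k b (G C (n + m)) y + fdd k n (fun _ => E) y.
Proof.
move=> c0 H n y b.
have [c1|c1] := leP 0%R (1 - c)%R; last first.
  apply: (@le_trans _ _ 0); first by rewrite lee_fin ltW.
  by apply: adde_ge0; exact: fdd_ge0.
elim: n y b => [|n IH] y b.
  have [Ey|Ey] := pselect (E y).
    rewrite fdd0 indic1 // -(add0e (1 - c)%:E); apply: leeD; first exact: fdd_ge0.
    by rewrite lee_fin lerBlDr lerDl.
  by rewrite fdd0 indic0 // adde0; apply: H.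
have [Ey|Ey] := pselect (E y); last first.
  rewrite (fdd_out n.+1 (fun _ => E) y Ey) adde0; apply: (le_trans (H y Ey b)).
  apply: fdd_mono => //; try by move=> j; exact: mG.
  move=> j; rewrite /G; case: ifP => h; case: ifP => h2 //.
  by move: h; rewrite (leq_trans (leq_addl n.+1 m) h2).
case: b => [|b].
  rewrite fdd0 indic1; last by rewrite /G addSn.
  rewrite -(adde0 (1 - c)%:E); apply: leeD; last exact: fdd_ge0.
  by rewrite lee_fin lerBlDr lerDl.
rewrite !fddS indic1; last by rewrite /G addSn.
rewrite indic1 // !mul1e.
have -> : (fun j => G C (n.+1 + m) j.+1) = G C (n + m) by [].
rewrite -ge0_integralD //; first last.
- exact: fdd_measC.
- by move=> z _; exact: fdd_ge0.
- exact: fdd_measG.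
- by move=> z _; exact: fdd_ge0.
apply: (@le_trans _ _ (\int[k y]_z (cst (1 - c)%:E) z)).
  by rewrite integral_cst // prob_kernel mule1.
apply: ge0_le_integral => //.
- apply: emeasurable_funD; last exact: fdd_measC.
  exact: fdd_measG.
Qed.

End aux.

Lemma efin_le_sub (R : realType) (a c : R) (u s : \bar R) :
  u \is a fin_num -> s \is a fin_num ->
  (a%:E <= u + s)%E -> (s <= c%:E)%E -> ((a - c)%:E <= u)%E.
Proof.
move=> fu fs; rewrite -(fineK fu) -(fineK fs) -EFinD !lee_fin => h1 h2.
by rewrite lerBlDr (le_trans h1) // lerD2l.
Qed.

Lemma exit_bound (R : realType) (a : R) (f : \bar R) :
  f \is a fin_num -> (0 <= f)%E -> (a%:E <= 1 - f)%E -> (a <= 1)%R /\ (f <= (1 - a)%:E)%E.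
Proof.
move=> ff; rewrite -(fineK ff) -EFinB !lee_fin => h0 h; split.
  by rewrite (le_trans h) // gerBl.
by rewrite lerBrDl -lerBrDr.
Qed.

Arguments exit_bound {R}.
Arguments efin_le_sub {R}.

Theorem proposition4p3 (R : realType) (T : ptopologicalType)
  (hcompact : compact [set: T])
  (K : R.-pker (borel_space T) ~> (borel_space T))
  (d' : measure_display) (Omega : measurableType d')
  (P : borel_space T -> probability Omega R)
  (xi : nat -> Omega -> borel_space T)
  (hchain : forall x, is_markov_chain_from K x (P x) xi)
  (S0 S1 S2 : set (borel_space T))
  (mS0 : measurable S0) (mS1 : measurable S1) (mS2 : measurable S2)
  (h01 : S0 `<=` S1) (h12 : S1 `<=` S2)
  (r b0 : R) (hr : 0 < r) (hb0 : 0 < b0) (n0 n1 n2 q : nat)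
  (A1 : forall x, S0 x -> (b0%:E <= exitP P xi n0 x S0)%E)
  (A2 : forall x, (S1 `\` S0) x -> ((1 - r / 4)%:E <= exitP P xi n1 x S1)%E)
  (A3 : forall x, (S2 `\` S1) x -> ((1 - r / 4)%:E <= exitP P xi n2 x S2)%E)
  (A4 : forall x n, (~` S2) x -> ((1 - r / 4)%:E <= stayP P xi n x (~` S1))%E)
  (hq : (1 - b0) ^+ q < r / 4) :
  forall x : borel_space T,
    (P x [set w | exists j, (q * n0 + n1 + n2 <= j)%N /\ S1 (xi j w)] < r%:E)%E.
Proof.
move=> x.
have mrect : forall (n : nat) (A : nat -> set (borel_space T)), (forall j, measurable (A j)) ->
    measurable [set w | forall j, (j <= n)%N -> A j (xi j w)].
  move=> n A mA.
  have -> : [set w | forall j, (j <= n)%N -> A j (xi j w)] =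
      \bigcap_j [set w | (j <= n)%N -> A j (xi j w)].
    by apply/seteqP; split => w /= H; [move=> j _; apply: H | move=> j; apply: H].
  apply: bigcapT_measurable => j /=.
  case: (j <= n)%N.
    have -> : [set w | true -> A j (xi j w)] = xi j @^-1` A j.
      by apply/seteqP; split => w /=; [move=> /(_ isT) | move=> ? _].
    by rewrite -[X in measurable X]setTI; apply: ((hchain x).1 j).
  have -> : [set w | false -> A j (xi j w)] = setT by apply/seteqP; split.
  exact: measurableT.
have hrect : forall (y : borel_space T) (n : nat) (A : nat -> set (borel_space T)), (forall j, measurable (A j)) ->
    P y [set w | forall j, (j <= n)%N -> A j (xi j w)] = fdd K n A y.
  by move=> y n A mA; apply: (hchain y).2.
have hcompl : forall (n : nat) (A : nat -> set (borel_space T)),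
    [set w | exists j, (j <= n)%N /\ ~ A j (xi j w)] = ~` [set w | forall j, (j <= n)%N -> A j (xi j w)].
  move=> n A; apply/seteqP; split => w /=.
    by move=> [j [hj hA]] H; apply: hA; apply: H.
  move=> /existsNP [j] /not_implyP [hj hA]; by exists j.
have hexit : forall (y : borel_space T) (n : nat) (A : nat -> set (borel_space T)), (forall j, measurable (A j)) ->
    P y [set w | exists j, (j <= n)%N /\ ~ A j (xi j w)] = (1%E - fdd K n A y)%E.
  move=> y n A mA; rewrite -hrect // -probability_setC; last exact: mrect.
  by rewrite hcompl.
have r4 : 0 <= r / 4 by lra.
have r2 : 0 <= r / 2 by lra.
have mC1 : measurable (~` S1) by exact: measurableC.
have mGS n j : measurable (G (~` S1) n j) by exact: mG.
have Q4 : forall z, ~ S2 z -> forall b, ((1 - r/4)%:E <= fdd K b (G (~` S1) 0) z)%E.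
  move=> z hz b; have -> : G (~` S1) 0 = (fun _ => ~` S1) by [].
  by rewrite -hrect; [exact: A4 | move=> _].
have Q3 : forall z, ~ S1 z -> forall b, ((1 - r/2)%:E <= fdd K b (G (~` S1) n2) z)%E.
  move=> z hz b.
  have H := @step _ _ _ K _ _ mC1 mS2 (r/4) 0 r4 Q4 n2 z b.
  rewrite addn0 in H.
  have hs : (fdd K n2 (fun _ => S2) z <= (r/4)%:E)%E.
    case: (pselect (S2 z)) => h2; last by rewrite fdd_out // lee_fin.
    have := A3 z (conj h2 hz); rewrite /exitP (hexit z n2 (fun _ => S2)) // => h.
    have [_ h'] := exit_bound _ _ (fdd_fin K n2 _ z (fun _ => mS2)) (fdd_ge0 K _ _ _) h.
    by apply: (le_trans h'); rewrite lee_fin; lra.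
  apply: (le_trans _ (efin_le_sub _ _ _ _ (fdd_fin K _ _ _ (mGS n2)) (fdd_fin K _ _ _ (fun _ => mS2)) H hs)).
  by rewrite lee_fin; lra.
have Q2 : forall z, ~ S0 z -> forall b, ((1 - 3 * r/4)%:E <= fdd K b (G (~` S1) (n1 + n2)) z)%E.
  move=> z hz b.
  have H := @step _ _ _ K _ _ mC1 mS1 (r/2) n2 r2 Q3 n1 z b.
  have hs : (fdd K n1 (fun _ => S1) z <= (r/4)%:E)%E.
    case: (pselect (S1 z)) => h1; last by rewrite fdd_out // lee_fin.
    have := A2 z (conj h1 hz); rewrite /exitP (hexit z n1 (fun _ => S1)) // => h.
    have [_ h'] := exit_bound _ _ (fdd_fin K n1 _ z (fun _ => mS1)) (fdd_ge0 K _ _ _) h.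
    by apply: (le_trans h'); rewrite lee_fin; lra.
  apply: (le_trans _ (efin_le_sub _ _ _ _ (fdd_fin K _ _ _ (mGS _)) (fdd_fin K _ _ _ (fun _ => mS1)) H hs)).
  by rewrite lee_fin; lra.
have [p [hp0 [hp hS]]] : exists p : R, 0 <= p /\ p < r/4 /\
    forall z, (fdd K (q * n0) (fun _ => S0) z <= p%:E)%E.
  case: (pselect (exists z, S0 z)) => [[z0 hz0]|hno]; last first.
    exists 0; split => //; split; first lra.
    by move=> z; rewrite fdd_out // => h; apply: hno; exists z.
  have hb1 : b0 <= 1.
    have := A1 z0 hz0; rewrite /exitP (hexit z0 n0 (fun _ => S0)) // => h.
    by have [] := exit_bound _ _ (fdd_fin K n0 _ z0 (fun _ => mS0)) (fdd_ge0 K _ _ _) h.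
  have hb1' : 0 <= 1 - b0 by lra.
  have hn0 : forall z, (fdd K n0 (fun _ => S0) z <= (1 - b0)%:E)%E.
    move=> z; case: (pselect (S0 z)) => h0; last by rewrite fdd_out // lee_fin subr_ge0.
    have := A1 z h0; rewrite /exitP (hexit z n0 (fun _ => S0)) // => h.
    by have [] := exit_bound _ _ (fdd_fin K n0 _ z (fun _ => mS0)) (fdd_ge0 K _ _ _) h.
  have hall : forall q' z, (fdd K (q' * n0) (fun _ => S0) z <= ((1 - b0) ^+ q')%:E)%E.
    elim => [|q' IH] z.
      by rewrite mul0n expr0; apply: fdd_le1.
    rewrite mulSnr; apply: (le_trans (stay_mul K _ mS0 _ _ _ hb1' hn0 z)).
    move: (IH z); rewrite -(fineK (fdd_fin K (q' * n0) _ z (fun _ => mS0))) -EFinM !lee_fin => h.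
    by rewrite exprS; apply: ler_wpM2l; rewrite ?subr_ge0.
  exists ((1 - b0) ^+ q); split; first by rewrite exprn_ge0 // subr_ge0.
  by split.
have Q1 : forall z b, ((1 - 3 * r/4 - p)%:E <= fdd K b (G (~` S1) (q * n0 + n1 + n2)) z)%E.
  move=> z b; rewrite -addnA.
  have c0 : 0 <= 3 * r / 4 by lra.
  have H := @step _ _ _ K _ _ mC1 mS0 (3 * r/4) (n1 + n2) c0 Q2 (q * n0) z b.
  exact: (efin_le_sub _ _ _ _ (fdd_fin K _ _ _ (mGS _)) (fdd_fin K _ _ _ (fun _ => mS0)) H (hS z)).
set N := (q * n0 + n1 + n2)%N.
pose F b := [set w | exists j, (j <= b)%N /\ ~ G (~` S1) N j (xi j w)].
have mF : forall b, measurable (F b).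
  move=> b; rewrite /F hcompl; apply: measurableC; exact: mrect.
have bound : forall b, (P x (F b) <= (3 * r / 4 + p)%:E)%E.
  move=> b; rewrite /F (hexit x b) //.
  move: (Q1 x b); rewrite -(fineK (fdd_fin K b _ x (mGS N))) -EFinB !lee_fin => h.
  lra.
have eU : [set w | exists j, (N <= j)%N /\ S1 (xi j w)] = \bigcup_b F b.
  apply/seteqP; split => w /=.
    move=> [j [hj h1]]; exists j => //; exists j; split => //.
    by rewrite /G hj => H; apply: H.
  move=> [b _ [j [hjb hG]]]; exists j; move: hG; rewrite /G; case: ifP => hN hG.
    by split => //; apply: contrapT.
  by exfalso; apply: hG.
have ndF : nondecreasing_seq F.
  move=> a b ab; apply/subsetPset => w [j [hj hG]]; exists j; split => //; exact: leq_trans hj ab.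
have hc := @nondecreasing_cvg_mu _ _ _ (P x) F mF (bigcupT_measurable _ mF) ndF.
rewrite eU -(cvg_lim _ hc) //.
apply: (@le_lt_trans _ _ (3 * r / 4 + p)%:E); last by rewrite lte_fin; lra.
apply: lime_le; first exact: cvgP hc.
by apply: nearW => b; exact: bound.
Qed.
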